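(* (a) Let $A$ be a set with $1\leq|A|\leq\omega$, and for each $\alpha\in A$ let $\mathbf{F}(\alpha)$ be a $\pi$-tree on a topological space $X_\alpha$. Suppose that for each $\alpha\in A$ there is $\gamma_\alpha\subseteq\mathcal{P}(\omega)$ such that $|\gamma_\alpha|\leq\omega$, $\gamma_\alpha$ has the finite intersection property, and $\gamma_\alpha\gg\mathrm{Rise}_{\mathbf{F}(\alpha)}(X_\alpha)$. Then the Tychonoff product $\prod_{\alpha\in A}X_\alpha$ has a $\pi$-tree. (b) Suppose, in addition to the hypotheses of (a), that $\mathbf{G}$ is a $\pi$-tree on a topological space $Y$ and $\mathrm{Rise}_{\mathbf{G}}(Y)$ has the finite intersection property. Then the Tychonoff product $Y\times\prod_{\alpha\in A}X_\alpha$ has a $\pi$-tree.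
   Context: A family has the finite intersection property if every finite nonempty subfamily has nonempty intersection. Neighbourhoods are not necessarily open. $\omega=\{0,1,2,\dots\}$, ${}^{<\omega}\omega$ is the set of finite sequences of natural numbers. A tree is a strict partial order in which the set of predecessors of every node is well-ordered; $\mathrm{height}(x)$ is the ordinal isomorphic to the set of predecessors of $x$; a branch is a maximal chain; $\mathrm{sons}(x)$ is the set of immediate successors of $x$; $0$ denotes the least node. A foliage tree is a pair $\mathbf{F}=(T,l)$ with $T$ a tree (skeleton) and $l$ a function on its nodes, $\mathbf{F}_x:=l(x)$; tree notions apply via the skeleton. $\mathrm{shoot}_{\mathbf{F}}(v)=\{\bigcup_{x\in C}\mathbf{F}_x: C\text{ a cofinite subset of }\mathrm{sons}_{\mathbf{F}}(v)\}$; $\mathrm{scope}_{\mathbf{F}}(p)=\{x:p\in\mathbf{F}_x\}$. For families $\gamma,\delta$ of sets, $\gamma\gg\delta$ means every nonempty $D\in\delta$ contains some nonempty $G\in\gamma$. $\mathrm{rise}_{\mathbf{F}}(p,U)=\{\mathrm{height}_{\mathbf{F}}(v): v\in\mathrm{scope}_{\mathbf{F}}(p),\ \mathrm{shoot}_{\mathbf{F}}(v)\gg\{U\}\}$; $\mathrm{Rise}_{\mathbf{F}}(X)=\{\mathrm{rise}_{\mathbf{F}}(p,U):p\in X,\ U\text{ a neighbourhood of }p\text{ in }X\}$. $\mathbf{F}$ is locally strict if each non-maximal leaf $\mathbf{F}_x$ is the disjoint union of $\mathbf{F}_s$, $s\in\mathrm{sons}(x)$; has strict branches if it has a node and for each branch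 $B$, $\bigcap_{x\in B}\mathbf{F}_x$ is a singleton; is open in $X$ if all leaves are open in $X$; is a foliage $\omega,\omega$-tree if its skeleton is order-isomorphic to $({}^{<\omega}\omega,\subsetneq)$. A Baire foliage tree on $X$ is an open in $X$, locally strict foliage $\omega,\omega$-tree with strict branches and $\mathbf{F}_{0_{\mathbf{F}}}=X$. $\mathbf{F}$ grows into $X$ if for every $p\in X$ and neighbourhood $U$ of $p$ there is $z\in\mathrm{scope}_{\mathbf{F}}(p)$ with $\mathrm{shoot}_{\mathbf{F}}(z)\gg\{U\}$. A $\pi$-tree on $X$ is a Baire foliage tree on $X$ that grows into $X$; a space has a $\pi$-tree if there is a $\pi$-tree on it. *)

(* Defs.v *)
From HB Require Import structures.
From mathcomp Require Import all_boot all_order.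
From mathcomp Require Import all_classical.
From mathcomp Require Import topology.
Set Implicit Arguments. Unset Strict Implicit. Unset Printing Implicit Defensive.
Local Open Scope classical_set_scope.

(* Foliage omega,omega-trees: the skeleton is taken to be ({}^{<omega}omega, strict
   prefix order), nodes are [seq nat]; a foliage tree on T is the leaf function. *)
Definition foliage (T : Type) := seq nat -> set T.

Definition sons (v : seq nat) : set (seq nat) := [set w | exists n, w = rcons v n].

(* height of a node = order type of its predecessors = its length *)
Definition height (v : seq nat) : nat := size v.

Definition chain (C : set (seq nat)) : Prop :=
  forall x y, C x -> C y -> prefix x y \/ prefix y x.
Definition branch (B : set (seq nat)) : Prop :=
  chain B /\ forall C, chain C -> B `<=` C -> C = B.

Section Foliage.
Context {T : topologicalType}.
Implicit Types (F : foliage T).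

Definition locally_strict F : Prop :=
  forall x, F x = \bigcup_(s in sons x) F s /\
    (forall s t, sons x s -> sons x t -> s <> t -> F s `&` F t = set0).

Definition strict_branches F : Prop :=
  forall B, branch B -> exists p : T, \bigcap_(x in B) F x = [set p].

Definition open_foliage F : Prop := forall x, open (F x).

Definition baire_foliage_tree F : Prop :=
  [/\ open_foliage F, locally_strict F, strict_branches F & F [::] = setT].

Definition shoot F (v : seq nat) : set (set T) :=
  [set \bigcup_(x in C) F x | C in
     [set C : set (seq nat) | C `<=` sons v /\ finite_set (sons v `\` C)]].

Definition scope F (p : T) : set (seq nat) := [set x | F x p].

End Foliage.

Definition gg {U : Type} (gamma delta : set (set U)) : Prop :=
  forall D, delta D -> D !=set0 -> exists G, [/\ gamma G, G !=set0 & G `<=` D].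

Section Rise.
Context {T : topologicalType}.
Implicit Types (F : foliage T).

Definition rise F (p : T) (U : set T) : set nat :=
  [set height v | v in [set v | scope F p v /\ gg (shoot F v) [set U]]].

Definition Rise F : set (set nat) :=
  [set R | exists (p : T) (U : set T), nbhs p U /\ R = rise F p U].

Definition grows_into F : Prop :=
  forall (p : T) (U : set T), nbhs p U ->
    exists z, scope F p z /\ gg (shoot F z) [set U].

Definition pi_tree F : Prop := baire_foliage_tree F /\ grows_into F.

End Rise.

Definition has_pi_tree (T : topologicalType) : Prop := exists F : foliage T, pi_tree F.

Definition fip {U : Type} (gamma : set (set U)) : Prop :=
  forall D : set (set U), finite_set D -> D !=set0 -> D `<=` gamma ->
    \bigcap_(S in D) S !=set0.

(* Main.v *)
Require Import Defs.
From HB Require Import structures.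
From mathcomp Require Import all_boot all_order.
From mathcomp Require Import all_classical.
From mathcomp Require Import topology.
From Stdlib Require List.
Set Implicit Arguments. Unset Strict Implicit. Unset Printing Implicit Defensive.
Local Open Scope classical_set_scope.

Definition cyl (v : seq nat) : set (nat -> nat) := [set s | mkseq s (size v) = v].

Lemma take_mkseq' (f : nat -> nat) k n : k <= n -> take k (mkseq f n) = mkseq f k.
Proof.
move=> kn; apply: (@eq_from_nth _ 0); first by rewrite size_takel ?size_mkseq.
move=> i; rewrite size_takel ?size_mkseq // => hik.
by rewrite nth_take // !nth_mkseq // (leq_trans hik kn).
Qed.

Lemma prefix_size_eq (x y : seq nat) : prefix x y -> size y <= size x -> x = y.
Proof.
rewrite prefixE => /eqP hx hs; by rewrite -{1}hx take_oversize.
Qed.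

Lemma prefix_nth (x y : seq nat) i : prefix x y -> i < size x -> nth 0 x i = nth 0 y i.
Proof. by rewrite prefixE => /eqP hx hi; rewrite -{1}hx nth_take. Qed.

Lemma prefix_size (x y : seq nat) : prefix x y -> size x <= size y.
Proof. rewrite prefixE => /eqP h; rewrite -{1}h size_take; by case: ltnP => // /ltnW. Qed.

Lemma prefix_common (x y z : seq nat) : prefix x z -> prefix y z -> prefix x y \/ prefix y x.
Proof.
rewrite !prefixE => /eqP hx /eqP hy.
move: hx hy; set sx := size x; set sy := size y => hx hy.
case: (leqP sx sy) => h.
  by left; apply/eqP; rewrite -hx -hy take_takel.
by right; apply/eqP; rewrite -hx -hy take_takel // ltnW.
Qed.

Lemma prefix_mkseq (s : nat -> nat) m n : m <= n -> prefix (mkseq s m) (mkseq s n).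
Proof. by move=> h; rewrite prefixE size_mkseq take_mkseq'. Qed.

Lemma branch_seq (B : set (seq nat)) : branch B ->
  exists s : nat -> nat, forall v, B v <-> v = mkseq s (size v).
Proof.
move=> [ch mx].
have clos : forall b c, B b -> prefix c b -> B c.
  move=> b c Bb cb.
  have chC : chain (B `|` [set c]).
    move=> x y [Bx|->] [By|->]; first exact: ch.
    - have [xb|bx] := ch _ _ Bx Bb.
        by have := prefix_common xb cb.
      by right; apply: prefix_trans cb bx.
    - have [yb|by_] := ch _ _ By Bb.
        by have := prefix_common cb yb.
      by left; apply: prefix_trans cb by_.
    - by left; exact: prefix_refl.
  have := mx _ chC (@subsetUl _ _ _).
  by move=> e; rewrite -e; right.
have B0 : B [::].
  have chC : chain (B `|` [set [::]]).
    move=> x y [Bx|->] [By|->]; first exact: ch.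
    - by right; exact: prefix0s.
    - by left; exact: prefix0s.
    - by left; exact: prefix_refl.
  by rewrite -(mx _ chC (@subsetUl _ _ _)); right.
have unb : forall n, exists b, B b /\ n < size b.
  move=> n; apply: contrapT => hn.
  have bnd : forall b, B b -> size b <= n.
    by move=> b Bb; rewrite leqNgt; apply/negP => h; apply: hn; exists b.
  have ex0 : exists k, exists b, B b /\ size b = k by exists 0, [::].
  have bnd' : forall k, (exists b, B b /\ size b = k) -> k <= n.
    by move=> k [b [Bb <-]]; exact: bnd.
  pose P := fun k => `[< exists b, B b /\ size b = k >].
  have exP : exists k, P k by case: ex0 => k hk; exists k; exact/asboolP.
  have bP : forall k, P k -> k <= n by move=> k /asboolP; exact: bnd'.
  case: (ex_maxnP exP bP) => m Pm mmax; move: Pm; rewrite /P => /asboolP [b [Bb sb]].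
  have chC : chain (B `|` [set rcons b 0]).
    move=> x y [Bx|->] [By|->]; first exact: ch.
    - left; have [xb|bx] := ch _ _ Bx Bb.
        exact: prefix_trans xb (prefix_rcons _ _).
      have -> : x = b.
        apply/esym/prefix_size_eq => //; rewrite sb; apply: mmax; apply/asboolP; by exists x.
      exact: prefix_rcons.
    - right; have [yb|bx] := ch _ _ By Bb.
        exact: prefix_trans yb (prefix_rcons _ _).
      have -> : y = b.
        apply/esym/prefix_size_eq => //; rewrite sb; apply: mmax; apply/asboolP; by exists y.
      exact: prefix_rcons.
    - by left; exact: prefix_refl.
  have : B (rcons b 0) by rewrite -(mx _ chC (@subsetUl _ _ _)); right.
  move=> Br; have := mmax (size (rcons b 0)); rewrite size_rcons sb ltnn => h.
  suff : false by []; apply: h.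
  by rewrite /P; apply/asboolP; exists (rcons b 0); rewrite size_rcons sb.
pose bn := fun n => xget [::] [set b | B b /\ n < size b].
have bnP : forall n, B (bn n) /\ n < size (bn n).
  by move=> n; rewrite /bn; case: xgetP => //; case: (unb n) => b hb /(_ b).
exists (fun n => nth 0 (bn n) n) => v; split.
  move=> Bv; apply: (@eq_from_nth _ 0); first by rewrite size_mkseq.
  move=> i hi; rewrite nth_mkseq //.
  have [B1 h1] := bnP i.
  by have [vb|bv] := ch _ _ Bv B1; [exact: prefix_nth| apply/esym/prefix_nth].
move=> ->.
have [b [Bb hb]] := unb (size v).
have bE : b = mkseq (fun n => nth 0 (bn n) n) (size b).
  apply: (@eq_from_nth _ 0); first by rewrite size_mkseq.
  move=> i hi; rewrite nth_mkseq //.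
  have [B1 h1] := bnP i.
  by have [vb|bv] := ch _ _ Bb B1; [exact: prefix_nth| apply/esym/prefix_nth].
apply: (clos b) => //; rewrite [X in prefix _ X]bE; apply: prefix_mkseq; exact: ltnW.
Qed.

Lemma mkseq_ext (f g : nat -> nat) : (forall n, mkseq f n = mkseq g n) -> f = g.
Proof.
move=> h; apply: funext => n; have := h n.+1; rewrite !mkseqS => /rcons_inj [] _ //.
Qed.

Lemma finite_not_cof (z : seq nat) (C : set (seq nat)) :
  finite_set (sons z `\` C) -> exists K, forall n, K <= n -> C (rcons z n).
Proof.
move=> /finite_seqP [l hl].
exists (\sum_(w <- l) last 0 w).+1 => n hn; apply: contrapT => nC.
have : (sons z `\` C) (rcons z n) by split => //; exists n.
rewrite hl /= => inl.
have : last 0 (rcons z n) <= \sum_(w <- l) last 0 w.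
  rewrite (big_rem _ inl) /=; exact: leq_addr.
by rewrite last_rcons leqNgt hn.
Qed.

Section GL.
Variable Z : topologicalType.
Variable Phi : Z -> nat -> nat.
Hypothesis Phi_inj : injective Phi.
Hypothesis Phi_surj : forall s, exists z, Phi z = s.
Hypothesis Phi_open : forall v, open (Phi @^-1` cyl v).
Hypothesis Phi_grow : forall p U, nbhs p U -> exists L K,
  forall n, K <= n -> Phi @^-1` cyl (rcons (mkseq (Phi p) L) n) `<=` U.

Let FZ : foliage Z := fun v => Phi @^-1` cyl v.

Lemma GL_pi : pi_tree FZ.
Proof.
split; [split|].
- by move=> v; exact: Phi_open.
- move=> x; split.
    apply/seteqP; split.
      move=> z hz; exists (rcons x (Phi z (size x))); first by exists (Phi z (size x)).
      by rewrite /FZ /cyl /= size_rcons mkseqS hz.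
    move=> z [s [n ->]]; rewrite /FZ /cyl /= size_rcons mkseqS.
    by move/rcons_inj => [].
  move=> s t [n ->] [m ->] st; apply/seteqP; split => // z [].
  rewrite /FZ /cyl /= !size_rcons !mkseqS => /rcons_inj [] _ e1 /rcons_inj [] _ e2.
  by exfalso; apply: st; rewrite -e1 -e2.
- move=> B /branch_seq [s hs].
  have [p hp] := Phi_surj s.
  exists p; apply/seteqP; split.
    move=> z hz; apply: Phi_inj; rewrite hp; apply: mkseq_ext => n.
    have := hz (mkseq s n); rewrite /FZ /cyl /= size_mkseq; apply.
    by apply/hs; rewrite size_mkseq.
  by move=> z -> x /hs hx; rewrite /FZ /cyl /= hp -hx.
- by apply/seteqP; split.
move=> p U /Phi_grow [L [K hK]].
exists (mkseq (Phi p) L); split; first by rewrite /scope /FZ /cyl /= size_mkseq.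
move=> D -> _.
pose z := mkseq (Phi p) L.
pose C := [set w | exists2 n, K <= n & w = rcons z n].
exists (\bigcup_(x in C) FZ x); split.
- exists C => //; split; first by move=> w [n _ ->]; exists n.
  apply: (@sub_finite_set _ _ ((rcons z) @` `I_K)); last exact/finite_image/finite_II.
  move=> w [[n ->]] nC; exists n => //; rewrite /= ltnNge; apply/negP => hn; apply: nC.
  by exists n.
- have [p0 hp0] := Phi_surj (nth 0 (rcons z K)).
  exists p0, (rcons z K); first by exists K.
  by rewrite /FZ /cyl /= hp0 mkseq_nth.
- by move=> z' [x [n hn ->]]; exact: hK.
Qed.

Lemma GL : has_pi_tree Z.
Proof. by exists FZ; exact: GL_pi. Qed.
End GL.

Lemma prefix_branch (s : nat -> nat) : branch [set v | v = mkseq s (size v)].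
Proof.
split.
  move=> x y hx hy; rewrite hx hy.
  by case: (leqP (size x) (size y)) => h; [left|right]; apply: prefix_mkseq => //; exact: ltnW.
move=> C chC sBC; apply/seteqP; split => // c Cc /=.
have Cb : C (mkseq s (size c)) by apply: sBC; rewrite /= size_mkseq.
have [h|h] := chC _ _ Cc Cb.
  by apply: prefix_size_eq => //; rewrite size_mkseq.
by apply/esym/prefix_size_eq => //; rewrite size_mkseq.
Qed.

Section Beta.
Variable T : topologicalType.
Variable F : foliage T.
Hypothesis hF : pi_tree F.

Fixpoint pref (x : T) (n : nat) : seq nat :=
  if n is n'.+1 then rcons (pref x n') (xget 0 [set k | F (rcons (pref x n') k) x])
  else [::].

Definition beta (x : T) (n : nat) : nat := xget 0 [set k | F (rcons (pref x n) k) x].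

Lemma prefS x n : pref x n.+1 = rcons (pref x n) (beta x n).
Proof. by []. Qed.

Lemma prefE x n : pref x n = mkseq (beta x) n.
Proof. by elim: n => [|n IH] //=; rewrite mkseqS -IH. Qed.

Lemma F_pref x n : F (pref x n) x.
Proof.
have [[_ ls _ F0] _] := hF.
elim: n => [|n IH] /=; first by rewrite F0.
case: xgetP => //.
move: IH; rewrite (proj1 (ls (pref x n))) => -[s [k ->]] hk /(_ k); by [].
Qed.

Lemma F_pref_uniq x v : F v x -> v = pref x (size v).
Proof.
have [[_ ls _ F0] _] := hF.
elim/last_ind: v => [//|v k IH] Fv.
have Fv' : F v x by rewrite (proj1 (ls v)); exists (rcons v k) => //; exists k.
have e := IH Fv'; rewrite size_rcons prefS -e.
congr rcons.
have hb : F (rcons v (beta x (size v))) x.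
  by have := F_pref x (size v).+1; rewrite prefS -e.
apply: contrapT => nk.
have : F (rcons v k) `&` F (rcons v (beta x (size v))) = set0.
  apply: (proj2 (ls v)); [by exists k | by exists (beta x (size v)) | by move/rcons_inj => [] ].
by move/seteqP => [/(_ x) h _]; exact: h.
Qed.

Lemma beta_cyl x v : cyl v (beta x) <-> F v x.
Proof.
rewrite /cyl /= -prefE; split; first by move=> <-; exact: F_pref.
by move=> /F_pref_uniq <-.
Qed.

Lemma beta_inj : injective beta.
Proof.
have [[_ _ sb _] _] := hF.
move=> x y exy.
have [q hq] := sb _ (prefix_branch (beta x)).
have inB : forall z, beta z = beta x -> (\bigcap_(v in [set v | v = mkseq (beta x) (size v)]) F v) z.
  by move=> z ez v /= ->; apply/beta_cyl; rewrite /cyl /= ez size_mkseq.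
have := inB x erefl; have := inB y (esym exy); rewrite hq /= => -> -> //.
Qed.

Lemma beta_surj s : exists x, beta x = s.
Proof.
have [[_ _ sb _] _] := hF.
have [q hq] := sb _ (prefix_branch s).
exists q; apply: mkseq_ext => n.
have : (\bigcap_(v in [set v | v = mkseq s (size v)]) F v) q by rewrite hq.
move=> /(_ (mkseq s n)) /=; rewrite size_mkseq => /(_ erefl) /beta_cyl.
by rewrite /cyl /= size_mkseq.
Qed.

Lemma F_nonempty v : exists x, F v x.
Proof. have [x hx] := beta_surj (nth 0 v); exists x; apply/beta_cyl; by rewrite /cyl /= hx mkseq_nth. Qed.

Lemma rise_cof p U h : U p -> rise F p U h ->
  exists K, forall n, K <= n -> F (rcons (pref p h) n) `<=` U.
Proof.
move=> Up [v [sv gv] <-].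
have [G [[C [sC fC] <-] _ GU]] := gv U erefl (ex_intro _ p Up).
have [K hK] := finite_not_cof fC.
exists K => n hn y hy; apply: GU; exists (rcons v n); first exact: hK.
by move: hy; rewrite /height -(F_pref_uniq sv).
Qed.

Lemma rise_ge p U N h : U p -> U `<=` F (pref p N) -> rise F p U h -> N <= h.
Proof.
move=> Up UF hr; rewrite leqNgt; apply/negP => hN.
have [K hK] := rise_cof Up hr.
pose n := maxn K (beta p h).+1.
have [q hq] := F_nonempty (rcons (pref p h) n).
have /UF /beta_cyl := hK n (leq_maxl _ _) _ hq.
move: hq => /beta_cyl; rewrite /cyl /= size_rcons !prefE !size_mkseq mkseqS => /rcons_inj [] _ e1.
move=> /(congr1 (fun l => nth 0 l h)); rewrite !nth_mkseq // e1 => e2.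
by move: (leq_maxr K (beta p h).+1); rewrite -/n e2 ltnn.
Qed.

Lemma rise_mono p U1 U2 : U1 p -> U1 `<=` U2 -> rise F p U1 `<=` rise F p U2.
Proof.
move=> U1p s12 h [v [sv gv] <-]; exists v => //; split => // D -> _.
have [G [sG nG GU]] := gv U1 erefl (ex_intro _ p U1p).
by exists G; split => //; apply: subset_trans GU s12.
Qed.

Lemma rise_unbounded p U N : nbhs p U -> exists h, N <= h /\ rise F p U h.
Proof.
have [[op _ _ _] gr] := hF.
move=> nU.
have nU' : nbhs p (U `&` F (pref p N)).
  apply: filterI => //; apply: open_nbhs_nbhs; split; [exact: op|exact: F_pref].
have [z [sz gz]] := gr _ _ nU'.
exists (height z); split; last first.
  apply: (@rise_mono p (U `&` F (pref p N))).
  - by split; [exact: nbhs_singleton | exact: F_pref].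
  - by move=> ? [].
  by rewrite /rise; exists z.
apply: (@rise_ge p (U `&` F (pref p N))).
- by split; [exact: nbhs_singleton | exact: F_pref].
- by move=> ? [].
by rewrite /rise; exists z.
Qed.

Lemma rise_small p N : exists h, rise F p (F (pref p N)) h /\
  forall h', rise F p (F (pref p N)) h' -> N <= h'.
Proof.
have [[op _ _ _] gr] := hF.
have [h [_ hr]] := @rise_unbounded p (F (pref p N)) 0
  (open_nbhs_nbhs (conj (op _) (F_pref p N))).
exists h; split => // h'; apply: rise_ge => //; exact: F_pref.
Qed.

End Beta.

Section MuExists.
Variable T : topologicalType.
Variable F : foliage T.
Hypothesis hF : pi_tree F.
Variable gam : set (set nat).
Hypothesis gc : countable gam.
Hypothesis gf : fip gam.
Hypothesis gg_ : gg gam (Rise F).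

Lemma Rise_nonempty R : Rise F R -> R !=set0.
Proof.
move=> [p [U [nU ->]]].
have [h [_ hr]] := rise_unbounded hF 0 nU; by exists h.
Qed.

Lemma mu_exists : exists mu : nat -> nat, (forall k, mu k < mu k.+1) /\
  forall R, Rise F R -> exists J, forall k, J <= k -> R (mu k).
Proof.
have [x0 _] := beta_surj hF (fun _ => 0).
have [op _ _ _] := hF.1.
have RiseN : forall N, exists G, [/\ gam G, G !=set0 & forall m, G m -> N <= m].
  move=> N.
  have [h [hr hge]] := rise_small hF x0 N.
  have RR : Rise F (rise F x0 (F (pref F x0 N))).
    exists x0, (F (pref F x0 N)); split => //.
    apply: open_nbhs_nbhs; split; [exact: op | exact: F_pref].
  have [G [gG nG GR]] := gg_ RR (ex_intro _ h hr).
  by exists G; split => // m /GR; exact: hge.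
have [G0 [gG0 _ _]] := RiseN 0.
have [f finj] := countable_injP _ gc.
pose g := fun j => xget G0 [set G | gam G /\ f G = j].
have gam_g : forall j, gam (g j).
  by move=> j; rewrite /g; case: xgetP => // G _ [].
have g_surj : forall G, gam G -> exists j, g j = G.
  move=> G gG; exists (f G); rewrite /g; case: xgetP.
    move=> G' _ [gG' e]; apply: finj => //; exact/mem_set.
  by move=> /(_ G) h; exfalso; apply: h.
pose I := fun k => [set m | forall j, j <= k -> g j m].
have Iunb : forall k N, exists m, I k m /\ N <= m.
  move=> k N.
  have [G [gG _ GN]] := RiseN N.
  have [j' gj'] := g_surj _ gG.
  pose k' := maxn k j'.
  have := gf (D := g @` `I_k'.+1).
  case.
  - exact/finite_image/finite_II.
  - by exists (g 0); exists 0.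
  - by move=> _ [j _ <-].
  move=> m hm; exists m; split.
    by move=> j hj; apply: hm; exists j => //; rewrite /= ltnS (leq_trans hj) // leq_maxl.
  by apply: GN; rewrite -gj'; apply: hm; exists j' => //; rewrite /= ltnS leq_maxr.
pose fix mu k := if k is k'.+1 then xget 0 [set m | I k m /\ mu k' < m] else xget 0 (I 0).
have muI : forall k, I k (mu k).
  case => [|k] /=.
    by case: xgetP => // /(_ _) h; have [m [hm _]] := Iunb 0 0; exfalso; exact: h hm.
  case: xgetP => [m _ []//|h]; have [m [hm hm']] := Iunb k.+1 (mu k).+1.
  by exfalso; apply: (h m).
have mu_lt : forall k, mu k < mu k.+1.
  move=> k /=; case: xgetP => [m _ []//|h]; have [m [hm hm']] := Iunb k.+1 (mu k).+1.
  by exfalso; apply: (h m).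
exists mu; split => // R RR.
have [G [gG nG GR]] := gg_ RR (Rise_nonempty RR).
have [j gj] := g_surj _ gG.
exists j => k hk; apply: GR; rewrite -gj; exact: muI.
Qed.
End MuExists.

From mathcomp Require Import zify.

Definition bcode (a b : nat) : nat := if a <= b then (b - a).*2 else ((a - b).*2).-1.
Definition bdecode (m c : nat) : nat * nat :=
  if odd c then (m + (c.+1)./2, m) else (m, m + c./2).

Lemma bdecode_code a b : bdecode (minn a b) (bcode a b) = (a, b).
Proof.
rewrite /bdecode /bcode; case: leqP => h.
  rewrite odd_double /= doubleK; congr pair; lia.
have hab : 0 < a - b by lia.
have -> : odd ((a - b).*2).-1 by rewrite -subn1 oddB ?odd_double // double_gt0.
rewrite prednK ?double_gt0 // doubleK; congr pair; lia.
Qed.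

Lemma bcode_decode m c : let p := bdecode m c in minn p.1 p.2 = m /\ bcode p.1 p.2 = c.
Proof.
rewrite /bdecode /bcode; have := odd_double_half c; case: (odd c) => /= hc.
  split; first lia.
  have -> : (m + (c.+1)./2 <= m) = false by apply/negbTE; rewrite -ltnNge; lia.
  have -> : m + (c.+1)./2 - m = (c.+1)./2 by lia.
  have : (c.+1) = (c.+1)./2.*2.
    have := odd_double_half c.+1; rewrite /= -hc /=; lia.
  lia.
split; first lia.
rewrite leq_addr; have -> : m + c./2 - m = c./2 by lia.
lia.
Qed.

Fixpoint enc (l : seq nat) : seq nat :=
  if l is x :: l' then
    (if l' is [::] then [:: x]
     else let e := enc l' in minn x (head 0 e) :: bcode x (head 0 e) :: behead e)
  else [::].

Fixpoint dec_aux (m : nat) (r : seq nat) : seq nat :=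
  if r is c :: r' then let p := bdecode m c in p.1 :: dec_aux p.2 r' else [:: m].

Definition dec (l : seq nat) : seq nat := if l is m :: r then dec_aux m r else [::].

Lemma enc_cons x l : l != [::] -> enc (x :: l) =
  minn x (head 0 (enc l)) :: bcode x (head 0 (enc l)) :: behead (enc l).
Proof. by case: l. Qed.

Lemma size_enc l : size (enc l) = size l.
Proof.
elim: l => [|x l IH] //.
case: l IH => [|y l] IH //.
rewrite enc_cons //; move: IH => /=; rewrite size_behead => ->; by [].
Qed.

Lemma size_dec_aux m r : size (dec_aux m r) = (size r).+1.
Proof. by elim: r m => [|c r IH] m //=; rewrite IH. Qed.

Lemma size_dec l : size (dec l) = size l.
Proof. by case: l => [|m r] //=; rewrite size_dec_aux. Qed.

Lemma enc_head_le l x : x \in l -> head 0 (enc l) <= x.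
Proof.
elim: l => [|y [|z l] IH] //=.
  by rewrite inE => /eqP ->.
rewrite inE => /orP [/eqP ->|xin]; first exact: geq_minl.
apply: leq_trans (geq_minr _ _) (IH xin).
Qed.

Lemma dec_enc l : dec (enc l) = l.
Proof.
elim: l => [|x l IH] //.
case: l IH => [|y l] IH //.
rewrite enc_cons //.
have : size (enc (y :: l)) = (size l).+1 by rewrite size_enc.
move: IH; set e := enc (y :: l); case: e => [|m r] //= IH _.
by rewrite bdecode_code /= IH.
Qed.

Lemma enc_dec_aux m r : enc (dec_aux m r) = m :: r.
Proof.
elim: r m => [|c r IH] m //.
rewrite [dec_aux _ _]/= enc_cons; last by rewrite -size_eq0 size_dec_aux.
rewrite IH /=; have [e1 e2] := bcode_decode m c; by rewrite e1 e2.
Qed.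

Lemma enc_dec l : enc (dec l) = l.
Proof. by case: l => [|m r] //=; rewrite enc_dec_aux. Qed.

Lemma enc_inj : injective enc.
Proof. by move=> a b e; rewrite -(dec_enc a) e dec_enc. Qed.

Lemma iotaSr N : iota 0 N.+1 = rcons (iota 0 N) N.
Proof. by rewrite -addn1 iotaD cats1. Qed.

Lemma uniq_flat_pairs (s : seq nat) (t : nat -> seq nat) :
  (forall n, uniq (t n)) -> uniq s -> uniq (flatten [seq [seq (n, h) | h <- t n] | n <- s]).
Proof.
move=> ut; elim: s => [|x s IH] //= /andP [xs us].
rewrite cat_uniq IH // andbT; apply/andP; split.
  by rewrite map_inj_uniq // => a b [].
apply/hasPn => -[n h] /flatten_mapP [y ys] /mapP [h' _ [-> _]].
by apply/negP => /mapP [h'' _ [e _]]; move: xs; rewrite -e ys.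
Qed.

Lemma mkseqD (f : nat -> nat) a b :
  mkseq f (a + b) = mkseq f a ++ mkseq (fun i => f (a + i)) b.
Proof.
apply: (@eq_from_nth _ 0); first by rewrite size_cat !size_mkseq.
move=> i; rewrite size_mkseq => hi; rewrite nth_cat size_mkseq nth_mkseq //.
case: ltnP => h; first by rewrite nth_mkseq.
by rewrite nth_mkseq ?subnKC //; rewrite ltn_subLR.
Qed.

Section Psi.
Variable V : nat -> bool.
Variable nu : nat -> nat -> nat.
Hypothesis V0 : V 0.
Hypothesis nu_low : forall n j, j <= n -> nu n j = 0.
Hypothesis nu_lt : forall n j, n <= j -> nu n j < nu n j.+1.

Definition block (j : nat) : seq (nat * nat) :=
  flatten [seq [seq (n, h) | h <- iota (nu n j) (nu n j.+1 - nu n j)]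
          | n <- [seq n <- iota 0 j.+1 | V n]].

Lemma mem_block n h j :
  ((n, h) \in block j) = [&& V n, n <= j, nu n j <= h & h < nu n j.+1].
Proof using V0 nu_low nu_lt.
apply/flatten_mapP/and4P.
  move=> [n' ]; rewrite mem_filter mem_iota /= => /andP [Vn' hn'] /mapP [h'].
  rewrite mem_iota => /andP [h1 h2] [-> ->]; split => //.
  have nj := hn'; rewrite add0n ltnS in nj.
  by move: h2; rewrite subnKC ?(ltnW (nu_lt nj)).
move=> [Vn nj h1 h2]; exists n; first by rewrite mem_filter Vn mem_iota.
by apply/mapP; exists h => //; rewrite mem_iota h1 subnKC ?(ltnW (nu_lt nj)).
Qed.

Lemma nu_mono1 n j : nu n j <= nu n j.+1.
Proof using V0 nu_low nu_lt. by case: (leqP n j) => h; [exact: ltnW (nu_lt h)| rewrite (nu_low h) nu_low // ltnW]. Qed.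

Lemma nu_mono n j j' : j <= j' -> nu n j <= nu n j'.
Proof using V0 nu_low nu_lt.
move=> /subnK <-; elim: (j' - j) => [|k IH] //.
by rewrite addSn (leq_trans IH) // nu_mono1.
Qed.

Lemma nu_big n j : j - n <= nu n j.
Proof using V0 nu_low nu_lt.
elim: j => [|j IH]; first by rewrite sub0n.
case: (leqP n j) => h.
  by rewrite subSn // (leq_ltn_trans IH) // nu_lt.
by have -> : j.+1 - n = 0 by apply/eqP; rewrite subn_eq0.
Qed.

Lemma block_uniq j : uniq (block j).
Proof using V0 nu_low nu_lt. by apply: uniq_flat_pairs; [move=> n; exact: iota_uniq| rewrite filter_uniq // iota_uniq]. Qed.

Lemma block_unique x j j' : x \in block j -> x \in block j' -> j = j'.
Proof using V0 nu_low nu_lt.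
case: x => n h; rewrite !mem_block => /and4P [_ _ a1 a2] /and4P [_ _ b1 b2].
apply/eqP; rewrite eqn_leq; apply/andP; split; rewrite leqNgt; apply/negP => hlt.
  by have := nu_mono n hlt; move=> /(leq_trans b2); rewrite leqNgt ltnS a1.
by have := nu_mono n hlt; move=> /(leq_trans a2); rewrite leqNgt ltnS b1.
Qed.

Lemma block_exists n h : V n -> exists j, (n, h) \in block j.
Proof using V0 nu_low nu_lt.
move=> Vn.
have ex : exists j, h < nu n j.+1.
  exists (h + n); apply: leq_trans (nu_big n _); lia.
case: (ex_minnP ex) => j hj jmin.
exists j; rewrite mem_block Vn hj andbT /=; apply/andP; split.
  rewrite leqNgt; apply/negP => jn; move: hj; rewrite nu_low //.
case: j hj jmin => [|j] hj jmin; first by rewrite nu_low.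
by rewrite leqNgt; apply/negP => /jmin; rewrite ltnn.
Qed.

Lemma block_size j : 0 < size (block j).
Proof using V0 nu_low nu_lt.
have : (0, nu 0 j) \in block j by rewrite mem_block V0 leqnn nu_lt.
by case: (block j).
Qed.

Definition outN (w : nat * nat -> nat) N :=
  flatten [seq enc (map w (block j)) | j <- iota 0 N].

Definition sz N := sumn [seq size (block j) | j <- iota 0 N].

Lemma outN_S w N : outN w N.+1 = outN w N ++ enc (map w (block N)).
Proof using V0 nu_low nu_lt. by rewrite /outN iotaSr -cats1 map_cat flatten_cat /= cats0. Qed.

Lemma sz_S N : sz N.+1 = sz N + size (block N).
Proof using V0 nu_low nu_lt. by rewrite /sz iotaSr -cats1 map_cat sumn_cat /= addn0. Qed.

Lemma size_outN w N : size (outN w N) = sz N.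
Proof using V0 nu_low nu_lt.
elim: N => [|N IH] //; by rewrite outN_S sz_S size_cat IH size_enc size_map.
Qed.

Lemma sz_ge N : N <= sz N.
Proof using V0 nu_low nu_lt.
elim: N => [|N IH] //; rewrite sz_S; have := block_size N; lia.
Qed.

Lemma sz_lt N : sz N < sz N.+1.
Proof using V0 nu_low nu_lt. rewrite sz_S; have := block_size N; lia. Qed.

Lemma outN_prefix w N M : N <= M -> exists r, outN w M = outN w N ++ r.
Proof using V0 nu_low nu_lt.
move=> /subnK <-; elim: (M - N) => [|k [r IH]]; first by exists [::]; rewrite cats0.
by exists (r ++ enc (map w (block (k + N)))); rewrite addSn outN_S IH catA.
Qed.

Definition Psi (w : nat * nat -> nat) (t : nat) : nat := nth 0 (outN w t.+1) t.

Lemma Psi_nth w N t : t < sz N -> Psi w t = nth 0 (outN w N) t.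
Proof using V0 nu_low nu_lt.
move=> ht; rewrite /Psi.
have [r1 e1] := outN_prefix w (leq_maxl N t.+1).
have [r2 e2] := outN_prefix w (leq_maxr N t.+1).
have : nth 0 (outN w (maxn N t.+1)) t = nth 0 (outN w N) t.
  by rewrite e1 nth_cat size_outN ht.
have : nth 0 (outN w (maxn N t.+1)) t = nth 0 (outN w t.+1) t.
  by rewrite e2 nth_cat size_outN (leq_trans (sz_ge t.+1)) // sz_ge.
by move=> <- <-.
Qed.

Lemma mkseq_Psi w N : mkseq (Psi w) (sz N) = outN w N.
Proof using V0 nu_low nu_lt.
apply: (@eq_from_nth _ 0); first by rewrite size_mkseq size_outN.
move=> i; rewrite size_mkseq => hi; by rewrite nth_mkseq // (Psi_nth w hi).
Qed.

Lemma outN_eq_blocks w w' N : outN w N = outN w' N ->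
  forall j, j < N -> {in block j, w =1 w'}.
Proof using V0 nu_low nu_lt.
elim: N => [|N IH] // e j hj.
move: e; rewrite !outN_S => /eqP; rewrite eqseq_cat ?size_outN // => /andP [/eqP e1 /eqP e2].
move: hj; rewrite ltnS leq_eqVlt => /orP [/eqP ->|hj]; last exact: IH.
by apply/eq_in_map; apply: enc_inj.
Qed.

Lemma Psi_inj w w' : Psi w = Psi w' -> forall j, {in block j, w =1 w'}.
Proof using V0 nu_low nu_lt.
move=> e j; apply: (@outN_eq_blocks w w' j.+1) => //.
by rewrite -!mkseq_Psi e.
Qed.

Lemma Psi_prefix w w' j : mkseq (Psi w') (sz j) = mkseq (Psi w) (sz j) ->
  forall j', j' < j -> {in block j', w' =1 w}.
Proof using V0 nu_low nu_lt. by rewrite !mkseq_Psi; exact: outN_eq_blocks. Qed.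

Lemma Psi_agree w w' t : (forall j, j <= t -> {in block j, w =1 w'}) ->
  Psi w t = Psi w' t.
Proof using V0 nu_low nu_lt.
move=> h; rewrite /Psi /outN; congr (nth 0 (flatten _) t).
apply/eq_in_map => j; rewrite mem_iota add0n ltnS => /andP [_ hj].
by congr enc; apply/eq_in_map; exact: h.
Qed.

Lemma Psi_head w j : Psi w (sz j) = head 0 (enc (map w (block j))).
Proof using V0 nu_low nu_lt.
rewrite (Psi_nth w (sz_lt j)) outN_S nth_cat size_outN ltnn subnn.
by case: (enc _).
Qed.

Lemma Psi_surj s : exists w, Psi w = s.
Proof using V0 nu_low nu_lt.
pose blk := fun x => xget 0 [set j | x \in block j].
have blkE : forall x j, x \in block j -> blk x = j.
  move=> x j xj; rewrite /blk; case: xgetP => [j' _ /= xj'|/(_ j)]; last by move=> h; exfalso; exact: h.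
  exact: block_unique xj' xj.
pose win := fun j => mkseq (fun i => s (sz j + i)) (size (block j)).
pose w := fun x => nth 0 (dec (win (blk x))) (index x (block (blk x))).
have mapw : forall j, map w (block j) = dec (win j).
  move=> j; apply: (@eq_from_nth _ 0); first by rewrite size_map size_dec size_mkseq.
  move=> i; rewrite size_map => hi.
  rewrite (nth_map (0,0)) //; rewrite /w (blkE _ j) ?mem_nth // index_uniq //.
  exact: block_uniq.
have outNs : forall N, outN w N = mkseq s (sz N).
  elim => [|N IH] //; by rewrite outN_S IH mapw enc_dec sz_S mkseqD.
exists w; apply: funext => t.
by rewrite /Psi outNs nth_mkseq // (leq_trans _ (sz_ge _)).
Qed.

End Psi.

Lemma list_bound {I : Type} (S : seq I) (P : I -> nat -> Prop) :
  (forall i, List.In i S -> exists K, forall n, K <= n -> P i n) ->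
  exists K, forall i, List.In i S -> forall n, K <= n -> P i n.
Proof.
elim: S => [|a S IH] h; first by exists 0.
have [K1 h1] := h a (or_introl erefl).
have [K2 h2] := IH (fun i hi => h i (or_intror hi)).
exists (maxn K1 K2) => i [<-|hi] n hn.
  by apply: h1; apply: leq_trans hn; exact: leq_maxl.
by apply: h2 => //; apply: leq_trans hn; exact: leq_maxr.
Qed.

Lemma nbhs_list {Z : topologicalType} {A : eqType} (z : Z) (l : seq A) (Q : A -> set Z) :
  (forall a, a \in l -> nbhs z (Q a)) -> nbhs z [set z' | forall a, a \in l -> Q a z'].
Proof.
have Fz : Filter (nbhs z) by exact: nbhs_filter.
elim: l => [|a l IH] h.
  by apply: filterS filterT => z' _ a.
have h2 : forall b, b \in l -> nbhs z (Q b) by move=> b hb; apply: h; rewrite inE hb orbT.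
have H := @filterI _ _ Fz _ _ (h a (mem_head _ _)) (IH h2).
apply: (@filterS _ _ Fz _ _ _ H). move=> z' [q1 q2] b; rewrite inE => /orP [/eqP ->|hb] //; exact: q2.
Qed.

Lemma nbhs_listIn {Z : topologicalType} {E : Type} (z : Z) (l : seq E) (Q : E -> set Z) :
  (forall e, List.In e l -> nbhs z (Q e)) -> nbhs z [set y | forall e, List.In e l -> Q e y].
Proof.
have Fz : Filter (nbhs z) by exact: nbhs_filter.
elim: l => [|a l IH] h.
  by apply: (@filterS _ _ Fz setT); [move=> y _ e [] | exact: filterT].
have h2 : forall b, List.In b l -> nbhs z (Q b) by move=> b hb; apply: h; right.
have H := @filterI _ _ Fz _ _ (h a (or_introl erefl)) (IH h2).
apply: (@filterS _ _ Fz _ _ _ H). by move=> y [q1 q2] b [<-|hb] //; exact: q2.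
Qed.

Section Core.
Local Unset Implicit Arguments.
Variables (Z : topologicalType) (I : Type) (X : I -> topologicalType).
Variable pr : forall i, Z -> X i.
Hypothesis pr_cont : forall i z V, nbhs (pr i z) V -> nbhs z (pr i @^-1` V).
Definition sat (i : I) (B : set Z) : set (X i) := [set x | forall z', pr i z' = x -> B z'].
Hypothesis pr_nbhs : forall z U, nbhs z U -> exists (S : seq (I * set Z)),
  (forall e, List.In e S -> nbhs (pr e.1 z) (sat e.1 e.2)) /\
  (forall z', (forall e, List.In e S -> e.2 z') -> U z').
Hypothesis pr_ex : forall x : (forall i, X i), exists z, forall i, pr i z = x i.
Hypothesis pr_inj : forall z z', (forall i, pr i z = pr i z') -> z = z'.
Variable F : forall i, foliage (X i).
Hypothesis hF : forall i, pi_tree (F i).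
Variable code : I -> nat.
Hypothesis code_inj : injective code.
Hypothesis code0 : exists i, code i = 0.
Variable mu : I -> nat -> nat.
Hypothesis mu_lt : forall i k, mu i k < mu i k.+1.
Variable i0 : I.
Hypothesis mu_good : forall i,
  (forall R, Rise (F i) R -> exists J, forall k, J <= k -> R (mu i k)) \/
  (i = i0 /\ forall k, mu i k = k).

Definition cdec (n : nat) : option I :=
  match pselect (exists i, code i = n) with
  | left h => Some (proj1_sig (cid h))
  | right _ => None
  end.

Lemma cdec_code i : cdec (code i) = Some i.
Proof.
rewrite /cdec; case: pselect => [h|[]]; last by exists i.
by congr Some; case: (cid h) => j /= /code_inj.
Qed.

Lemma cdec_some n i : cdec n = Some i -> code i = n.
Proof.
rewrite /cdec; case: pselect => // h [<-]; by case: (cid h).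
Qed.

Definition Vc (n : nat) : bool := `[< exists i, code i = n >].

Lemma Vc_dec n : Vc n -> exists i, code i = n /\ cdec n = Some i.
Proof. by move=> /asboolP [i <-]; exists i; rewrite cdec_code. Qed.

Definition mut (n : nat) : nat -> nat :=
  match cdec n with Some i => mu i | None => id end.

Lemma mut_lt n k : mut n k < mut n k.+1.
Proof. by rewrite /mut; case: (cdec n). Qed.

Definition nuc (n j : nat) : nat := if j <= n then 0 else mut n j.

Lemma nuc_low n j : j <= n -> nuc n j = 0.
Proof. by rewrite /nuc => ->. Qed.

Lemma nuc_lt n j : n <= j -> nuc n j < nuc n j.+1.
Proof.
move=> h; rewrite /nuc (_ : (j.+1 <= n) = false); last first.
  by apply/negbTE; rewrite -ltnNge ltnS.
by case: ifP => _; [exact: leq_ltn_trans (leq0n _) (mut_lt _ _) | exact: mut_lt].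
Qed.

Lemma Vc0 : Vc 0.
Proof. by apply/asboolP; case: code0 => i hi; exists i. Qed.

Definition getw (w : forall i, nat -> nat) (x : nat * nat) : nat :=
  match cdec x.1 with Some i => w i x.2 | None => 0 end.

Definition bz (z : Z) : forall i, nat -> nat := fun i => beta (F i) (pr i z).

Definition Phi (z : Z) : nat -> nat := Psi Vc nuc (getw (bz z)).

Lemma getw_code w i h : getw w (code i, h) = w i h.
Proof. by rewrite /getw cdec_code. Qed.

Lemma Vc_code i : Vc (code i).
Proof. by apply/asboolP; exists i. Qed.

Lemma Phi_inj : injective Phi.
Proof.
move=> z z' e; apply: pr_inj => i; apply: (beta_inj (hF i)); apply: funext => h.
have [j hj] := block_exists Vc0 nuc_low nuc_lt h (Vc_code i).
by have := Psi_inj Vc0 nuc_low nuc_lt e hj; rewrite !getw_code.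
Qed.

Lemma Phi_surj s : exists z, Phi z = s.
Proof.
have [w hw] := Psi_surj Vc0 nuc_low nuc_lt s.
pose x := fun i => proj1_sig (cid (beta_surj (hF i) (fun h => w (code i, h)))).
have hx : forall i, beta (F i) (x i) = fun h => w (code i, h).
  by move=> i; rewrite /x; case: cid.
have [z hz] := pr_ex x.
exists z; rewrite /Phi -hw; apply: funext => t.
apply: (Psi_agree Vc0 nuc_low nuc_lt) => j _ [n h] hin.
move: hin; rewrite (mem_block Vc0 nuc_low nuc_lt) => /and4P [Vn _ _ _].
have [i [ci _]] := Vc_dec n Vn.
by rewrite -ci getw_code /bz hz hx.
Qed.

Lemma Phi_open v : open (Phi @^-1` cyl v).
Proof.
rewrite openE => z hz.
have Fz : Filter (nbhs z) by exact: nbhs_filter.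
pose P := flatten [seq block Vc nuc j | j <- iota 0 (size v).+1].
have : nbhs z [set z' | forall a, a \in P -> getw (bz z') a = getw (bz z) a].
  have := @nbhs_list Z _ z P (fun a => [set z' | getw (bz z') a = getw (bz z) a]).
  move=> H; apply: (@filterS _ _ Fz _ _ _ (H _)) => // -[n h] _; rewrite /getw /=; case: (cdec n) => [i|]; last first.
    by apply: (@filterS _ _ Fz setT) => //; exact: filterT.
  apply: (@filterS _ _ Fz (pr i @^-1` F i (pref (F i) (pr i z) h.+1))).
    move=> z' hz'; move/(beta_cyl (hF i)): hz' => hc.
    have : mkseq (beta (F i) (pr i z')) h.+1 = mkseq (beta (F i) (pr i z)) h.+1.
      by move: hc; rewrite /cyl prefE size_mkseq.
    by move=> /(congr1 (fun l => nth 0 l h)); rewrite !nth_mkseq.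
  apply: pr_cont; apply: open_nbhs_nbhs; split; first by have [[op _ _ _] _] := hF i; exact: op.
  exact: F_pref.
move=> H; apply: (@filterS _ _ Fz _ _ _ H) => z' hz'.
rewrite /= /cyl /=; rewrite -[in RHS]hz.
apply: (@eq_from_nth _ 0); first by rewrite !size_mkseq.
move=> t; rewrite size_mkseq => ht; rewrite !nth_mkseq //.
apply: (Psi_agree Vc0 nuc_low nuc_lt) => j hj a ha; apply: hz'.
apply/flatten_mapP; exists j => //; rewrite mem_iota add0n ltnS.
exact: leq_trans hj (ltnW ht).
Qed.

Lemma Phi_grow p U : nbhs p U -> exists L K,
  forall n, K <= n -> Phi @^-1` cyl (rcons (mkseq (Phi p) L) n) `<=` U.
Proof.
move=> nU.
have [S [nS SU]] := pr_nbhs p U nU.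
pose R := fun e : I * set Z => rise (F e.1) (pr e.1 p) (sat e.1 e.2).
have [J1 hJ1] : exists J1, forall e, List.In e S -> forall n, J1 <= n ->
    code e.1 < n /\ ((forall k, n <= k -> R e (mu e.1 k)) \/
                     (e.1 = i0 /\ forall k, mu e.1 k = k)).
  apply: list_bound => e eS.
  case: (mu_good e.1) => [hg|hr].
    have RR : Rise (F e.1) (R e) by exists (pr e.1 p), (sat e.1 e.2); split => //; exact: nS.
    have [J hJ] := hg _ RR.
    exists (maxn J (code e.1).+1) => n hn; split; first by apply: leq_trans hn; exact: leq_maxr.
    left => k hk; apply: hJ; apply: leq_trans hk; apply: leq_trans hn; exact: leq_maxl.
  by exists (code e.1).+1 => n hn; split => //; right.
have [j [hj1 hj2]] : exists j, J1 <= j /\ forall e, List.In e S -> R e (mu e.1 j).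
  case: (pselect (exists e, List.In e S /\ e.1 = i0)) => [i0S|ni0S].
    pose W0 := [set x : X i0 | forall e, List.In e S -> forall z', pr i0 z' = x -> e.1 = i0 -> e.2 z'].
    have nW0 : nbhs (pr i0 p) W0.
      apply: (@nbhs_listIn (X i0) _ (pr i0 p) S
        (fun e => [set x : X i0 | forall z', pr i0 z' = x -> e.1 = i0 -> e.2 z'])).
      move=> [i B] eS; case: (pselect (i = i0)) => [ei|nei].
        subst i; have := nS _ eS; apply: filterS => x /= hx z' e1 _; exact: hx.
      by apply: nearW => x z' _ /= ei; exfalso; exact: nei.
    have W0p : W0 (pr i0 p) := nbhs_singleton nW0.
    have [h [hh Rh]] := rise_unbounded (hF i0) J1 nW0.
    exists h; split => // e eS; have [_ [hg|[ei hid]]] := hJ1 e eS h hh.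
      exact: hg.
    move: eS ei hid; case: e => [i B] /= eS ei hid; subst i; rewrite hid.
    have sub : W0 `<=` sat i0 B by move=> x hx z' hz'; exact: hx _ eS z' hz' erefl.
    rewrite /R /=; exact: (@rise_mono _ (F i0) (pr i0 p) W0 (sat i0 B) W0p sub _ Rh).
  exists J1; split => // e eS; have [_ [hg|[ei _]]] := hJ1 e eS J1 (leqnn _).
    exact: hg.
  by exfalso; apply: ni0S; exists e.
have [K hK] : exists K, forall e, List.In e S -> forall n, K <= n ->
    F e.1 (rcons (pref (F e.1) (pr e.1 p) (mu e.1 j)) n) `<=` sat e.1 e.2.
  apply: list_bound => e eS; apply: (rise_cof (hF e.1)); last exact: hj2.
  exact: nbhs_singleton (nS e eS).
exists (sz Vc nuc j), K => n hn z' hz'.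
apply: SU => -[i B] eS.
suff : sat i B (pr i z') by apply.
have hKi := hK _ eS; have hcode : code i < j := (hJ1 _ eS j hj1).1.
move: hKi hcode => /= hKi hcode.
move: hz'; rewrite /cyl /= size_rcons size_mkseq mkseqS => /rcons_inj [] e1 e2.
have agree := Psi_prefix Vc0 nuc_low nuc_lt e1.
have mutE : mut (code i) = mu i by rewrite /mut cdec_code.
have nuc_eq : nuc (code i) j = mu i j.
  by rewrite /nuc leqNgt hcode /= mutE.
have nuc_eq1 : nuc (code i) j.+1 = mu i j.+1.
  by rewrite /nuc leqNgt ltnS (ltnW hcode) /= mutE.
have inblk : (code i, mu i j) \in block Vc nuc j.
  by rewrite (mem_block Vc0 nuc_low nuc_lt) Vc_code (ltnW hcode) nuc_eq nuc_eq1 leqnn mu_lt.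
have big : n <= beta (F i) (pr i z') (mu i j).
  rewrite -e2 /Phi (Psi_head Vc0 nuc_low nuc_lt).
  have -> : beta (F i) (pr i z') (mu i j) = getw (bz z') (code i, mu i j) by rewrite getw_code.
  by apply: enc_head_le; apply: map_f.
have low : forall h, h < mu i j -> beta (F i) (pr i z') h = beta (F i) (pr i p) h.
  move=> h hh; have [j' hj'] := block_exists Vc0 nuc_low nuc_lt h (Vc_code i).
  have j'j : j' < j.
    rewrite ltnNge; apply/negP => jj'.
    move: hj'; rewrite (mem_block Vc0 nuc_low nuc_lt) => /and4P [_ _ h1 _].
    have := nu_mono Vc0 nuc_low nuc_lt (code i) jj'; rewrite nuc_eq => h2.
    by move: (leq_trans h2 h1); rewrite leqNgt hh.
  by have := agree j' j'j (code i, h) hj'; rewrite !getw_code.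
apply: (hKi (beta (F i) (pr i z') (mu i j))); first exact: leq_trans hn big.
apply/(beta_cyl (hF i)); rewrite /cyl /= size_rcons prefE size_mkseq mkseqS; congr rcons.
apply: (@eq_from_nth _ 0); first by rewrite !size_mkseq.
by move=> t; rewrite size_mkseq => ht; rewrite !nth_mkseq // low.
Qed.

Lemma core_pi : has_pi_tree Z.
Proof.
exact: (GL Phi_inj Phi_surj Phi_open Phi_grow).
Qed.

End Core.

Lemma prod_proj_nbhs (A : Type) (X : A -> topologicalType) (f : prod_topology X) i
  (V : set (X i)) : nbhs (f i) V -> nbhs f [set g : prod_topology X | V (g i)].
Proof.
move=> nV.
have /cvg_sup/(_ i) : f --> f by apply: cvg_id.
move=> h; apply: h.
exact: (@initial_continuous _ _ (fun g : prod_topology X => g i) f V nV).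
Qed.

Lemma prod_nbhs_entries (A : Type) (X : A -> topologicalType) (f : prod_topology X)
  (U : set (prod_topology X)) : nbhs f U ->
  exists S : seq (A * set (prod_topology X)),
    (forall e, List.In e S -> nbhs (f e.1) [set x | forall g : prod_topology X, g e.1 = x -> e.2 g]) /\
    (forall g, (forall e, List.In e S -> e.2 g) -> U g).
Proof.
move=> nU0; move: U nU0.
pose G := [set U : set (prod_topology X) | exists S : seq (A * set (prod_topology X)),
    (forall e, List.In e S -> nbhs (f e.1) [set x | forall g : prod_topology X, g e.1 = x -> e.2 g]) /\
    (forall g, (forall e, List.In e S -> e.2 g) -> U g)].
have FG : Filter G.
  split.
  - by exists [::]; split.
  - move=> P Q [S1 [h1 s1]] [S2 [h2 s2]]; exists (S1 ++ S2); split.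
      by move=> e /List.in_app_iff [] ?; [exact: h1 | exact: h2].
    by move=> g hg; split; [apply: s1 | apply: s2] => e he; apply: hg; apply/List.in_app_iff; [left|right].
  - by move=> P Q PQ [S [h s]]; exists S; split => // g /s; exact: PQ.
have := @cvg_sup _ _ (fun i => Topological.class (initial_topology (fun g : (forall i, X i) => g i))) G f FG.
move=> [_ h] U nU.
apply: (h _ U nU) => i B.
rewrite nbhsE => -[B' [oB' B'f] sub].
move: oB' => [O oO eO].
rewrite nbhs_filterE; exists [:: (i, B')]; split.
  move=> e [<-|[]] /=; apply: (@filterS _ _ _ O).
    by move=> x Ox g gx; rewrite -eO /= gx.
  by apply: open_nbhs_nbhs; split => //; move: B'f; rewrite -eO.
by move=> g hg; apply: sub; exact: (hg (i, B') (or_introl erefl)).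
Qed.


Lemma pair_nbhs_fst (Y W : topologicalType) (z : Y * W) (V : set Y) :
  nbhs z.1 V -> nbhs z [set z' | V z'.1].
Proof.
move=> nV; change (filter_prod (nbhs z.1) (nbhs z.2) [set z' | V z'.1]).
exists (V, setT) => //=; first by split => //; exact: filterT.
by move=> [a b] [].
Qed.

Lemma pair_nbhs_snd (Y W : topologicalType) (z : Y * W) (V : set W) :
  nbhs z.2 V -> nbhs z [set z' | V z'.2].
Proof.
move=> nV; change (filter_prod (nbhs z.1) (nbhs z.2) [set z' | V z'.2]).
exists (setT, V) => //=; first by split => //; exact: filterT.
by move=> [a b] [].
Qed.

Lemma pair_nbhs_split (Y W : topologicalType) (z : Y * W) (U : set (Y * W)) :
  nbhs z U -> exists P Q, [/\ nbhs z.1 P, nbhs z.2 Q & forall a b, P a -> Q b -> U (a, b)].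
Proof.
move=> nU; change (filter_prod (nbhs z.1) (nbhs z.2) U) in nU.
case: nU => [[P Q] [/= nP nQ] PQ]; exists P, Q; split => // a b Pa Qb; exact: (PQ (a, b)).
Qed.

Section Main.
Local Unset Implicit Arguments.
Variables (A : Type) (X : A -> topologicalType) (F : forall a : A, foliage (X a)).
Variable gamma : A -> set (set nat).
Hypothesis hA : [set: A] !=set0.
Hypothesis cA : countable [set: A].
Hypothesis hF : forall a, pi_tree (F a).
Hypothesis hg : forall a, [/\ countable (gamma a), fip (gamma a) & gg (gamma a) (Rise (F a))].

Lemma muA_ex (a : A) : exists mu : nat -> nat, (forall k, mu k < mu k.+1) /\
  forall R, Rise (F a) R -> exists J, forall k, J <= k -> R (mu k).
Proof. have [c f g] := hg a. by have := mu_exists (hF a) c f g. Qed.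

Definition muA (a : A) : nat -> nat := proj1_sig (cid (muA_ex a)).

Lemma muA_lt a k : muA a k < muA a k.+1.
Proof. by have [h _] := proj2_sig (cid (muA_ex a)); exact: h. Qed.

Lemma muA_good a R : Rise (F a) R -> exists J, forall k, J <= k -> R (muA a k).
Proof. by have [_ h] := proj2_sig (cid (muA_ex a)); exact: h. Qed.

Lemma fA_ex : exists f : A -> nat, {in [set: A] &, injective f}.
Proof. exact: (elimT (countable_injP _) cA). Qed.

Definition fA : A -> nat := proj1_sig (cid fA_ex).
Lemma fA_inj : injective fA.
Proof. move=> x y e; apply: (proj2_sig (cid fA_ex)) => //; exact: mem_set. Qed.

Lemma partA : has_pi_tree (prod_topology X).
Proof.
have [a0 _] := hA.
pose code := fun a : A => if pselect (a = a0) then 0 else (fA a).+1.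
have code_inj : injective code.
  move=> x y; rewrite /code; case: (pselect (x = a0)) => hx; case: (pselect (y = a0)) => hy //.
  - by move=> _; transitivity a0.
  - by move=> [] /fA_inj.
have c0 : exists i, code i = 0 by exists a0; rewrite /code; case: pselect.
apply: (core_pi (prod_topology X) A X (fun a (g : prod_topology X) => g a)
  _ _ _ _ F hF code code_inj c0 muA muA_lt a0).
- by move=> i z V; exact: prod_proj_nbhs.
- by move=> z U /prod_nbhs_entries.
- by move=> x; exists x.
- by move=> z z' h; apply: functional_extensionality_dep.
- by move=> i; left; exact: muA_good.
Qed.

Section PartB.
Variables (Y : topologicalType) (G : foliage Y).
Hypothesis hG : pi_tree G.

Definition XB (o : option A) : topologicalType :=
  match o with None => Y | Some a => X a end.

Definition ZB : topologicalType := (Y * prod_topology X)%type.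

Definition prB (o : option A) : ZB -> XB o :=
  match o as o return ZB -> XB o with
  | None => fun z => z.1
  | Some a => fun z => z.2 a
  end.

Definition FB (o : option A) : foliage (XB o) :=
  match o as o return foliage (XB o) with
  | None => G
  | Some a => F a
  end.

Definition codeB (o : option A) : nat := if o is Some a then (fA a).+1 else 0.

Definition muB (o : option A) : nat -> nat := if o is Some a then muA a else id.

Lemma partB : has_pi_tree ZB.
Proof.
have hFB : forall o, pi_tree (FB o) by case => [a|] /=; [exact: hF | exact: hG].
have cinj : injective codeB by move=> [a|] [b|] //= [] /fA_inj ->.
have c0 : exists i, codeB i = 0 by exists None.
have mlt : forall o k, muB o k < muB o k.+1 by case => [a|] k /=; [exact: muA_lt|].
apply: (core_pi ZB (option A) XB prB _ _ _ _ FB hFB codeB cinj c0 muB mlt None).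
- case => [a|] z V nV /=.
    apply: (pair_nbhs_snd (V := [set g : prod_topology X | V (g a)])).
    exact: prod_proj_nbhs.
  exact: pair_nbhs_fst.
- move=> z U /pair_nbhs_split [P [Q [nP nQ PQU]]].
  have [S2 [hS2 S2Q]] := prod_nbhs_entries nQ.
  exists ((None, [set z' : ZB | P z'.1]) ::
          map (fun e => (Some e.1, [set z' : ZB | e.2 z'.2])) S2); split.
    move=> e [<-|/List.in_map_iff [[a B] [<- eS2]]] /=.
      by apply: filterS nP => y Py z' hz; move: Py; rewrite -hz.
    by apply: filterS (hS2 _ eS2) => x hx z' hz'; apply: hx.
  move=> z' hz'; have -> : z' = (z'.1, z'.2) by case: (z').
  apply: PQU.
    exact: (hz' _ (or_introl erefl)).
  apply: S2Q => e eS2; apply: (hz' (Some e.1, [set z' : ZB | e.2 z'.2])).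
  by right; apply/List.in_map_iff; exists e.
- move=> x; exists (x None, fun a => x (Some a)); by case.
- move=> [y g] [y' g'] h; congr pair; first exact: (h None).
  by apply: functional_extensionality_dep => a; exact: (h (Some a)).
- case => [a|]; last by right.
  by left => R; exact: muA_good.
Qed.
End PartB.
End Main.

Theorem theorem12 (A : Type) (X : A -> topologicalType)
    (F : forall a : A, foliage (X a)) (gamma : A -> set (set nat)) :
  [set: A] !=set0 -> countable [set: A] ->
  (forall a, pi_tree (F a)) ->
  (forall a, [/\ countable (gamma a), fip (gamma a) & gg (gamma a) (Rise (F a))]) ->
  has_pi_tree (prod_topology X) /\
  (forall (Y : topologicalType) (G : foliage Y),
     pi_tree G -> fip (Rise G) -> has_pi_tree (Y * prod_topology X)%type).
Proof.
move=> hA cA hF hg; split; first exact: (partA A X F gamma hA cA hF hg).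
move=> Y G hG _; exact: (partB A X F gamma cA hF hg Y G hG).
Qed.
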